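(* For all $\theta,\theta_0>0$ and every probability distribution $F$ on $(0,\infty)$, \[ \| p_{\theta,F}-p_{\theta_0,F}\|_1 \le \frac{2|\theta-\theta_0|}{\theta_0}. \]
   Context: For $\theta>0$ and a finite measure $F$ on $(0,\infty)$, the exponential frailty density on $(0,\infty)^2$ is $p_{\theta,F}(x,y)=\int z^2\theta e^{-z(x+\theta y)}\,dF(z)$ (the density of $(X,Y)$ when, given $Z\sim F$, $X$ and $Y$ are independent exponentials with rates $Z$ and $\theta Z$). $\|\cdot\|_1$ denotes the $L^1$ norm with respect to Lebesgue measure on $(0,\infty)^2$. *)

(* Defs.v *)
From HB Require Import structures.
From mathcomp Require Import all_boot all_order all_algebra.
From mathcomp Require Import all_classical all_reals all_analysis.
Set Implicit Arguments. Unset Strict Implicit. Unset Printing Implicit Defensive.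
Import Order.TTheory GRing.Theory Num.Theory.
Import numFieldNormedType.Exports.
Local Open Scope classical_set_scope.
Local Open Scope ring_scope.

Definition pos_half {R : realType} : set R := `]0, +oo[%classic.

(* The exponential frailty density
   p_{theta,F}(x,y) = \int z^2 theta exp(-z (x + theta y)) dF(z),
   F a measure on (0,oo), represented as a measure on R and integrated
   over (0,oo). *)
Definition frailty_density {R : realType} (F : {measure set R -> \bar R})
  (theta : R) (xy : R * R) : \bar R :=
  (\int[F]_(z in pos_half)
     ((z ^+ 2 * theta * expR (- (z * (xy.1 + theta * xy.2))))%:E))%E.

Definition L1_dist_pos_quadrant {R : realType}
  (f g : R * R -> \bar R) : \bar R :=
  (\int[(@lebesgue_measure R) \x (@lebesgue_measure R)]_(xy in pos_half `*` pos_half)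
     `|f xy - g xy|)%E.

(* Main.v *)
Require Import Defs.
From HB Require Import structures.
From mathcomp Require Import all_boot all_order all_algebra.
From mathcomp Require Import all_classical all_reals all_analysis.
From mathcomp Require Import ring lra measurable_realfun.
Import Order.TTheory GRing.Theory Num.Theory.
Import numFieldNormedType.Exports.
Local Open Scope classical_set_scope.
Local Open Scope ring_scope.
Lemma int_mkcondE d (T : measurableType d) (R : realType) (mu : {measure set T -> \bar R})
  (D : set T) (f : T -> R) :
  (\int[mu]_(x in D) (f x)%:E = \int[mu]_x ((f \_ D) x)%:E)%E.
Proof. by rewrite integral_mkcond; apply: eq_integral => x _; rewrite !patchE; case: ifPn. Qed.

Lemma int_indicE d (T : measurableType d) (R : realType) (mu : {measure set T -> \bar R})
  (D : set T) (f : T -> R) :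
  (\int[mu]_(x in D) (f x)%:E = \int[mu]_x (\1_D x * f x)%:E)%E.
Proof.
rewrite integral_mkcond; apply: eq_integral => x _; rewrite patchE indicE.
by case: ifPn => _; rewrite ?mul1r ?mul0r.
Qed.

Lemma int_exp (R : realType) (c : R) : 0 < c ->
  (\int[lebesgue_measure]_(y in (@pos_half R)) (expR (- (c * y)))%:E = (c^-1)%:E)%E.
Proof.
move=> c0.
have h := integral_exponential_pdf c0.
rewrite /exponential_pdf -int_mkcondE in h.
have cexp : continuous (fun y : R => c * expR (- c * y)).
  move=> x; apply: (@continuousM _ R^o (fun=> c) (fun x => expR (- c * x))).
    exact: cst_continuous.
  apply: continuous_comp; last exact: continuous_expR.
  by apply: continuousM => //; apply: (@continuousN _ R^o); exact: cst_continuous.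
rewrite -integral_itv_obnd_cbnd in h; last first.
  apply/measurable_EFinP; apply: measurable_funTS.
  exact: continuous_measurable_fun.
have h2 : (\int[lebesgue_measure]_(y in (@pos_half R)) (c%:E * (expR (- (c * y)))%:E) = 1)%E.
  by rewrite -h; apply: eq_integral => y _; rewrite -EFinM mulNr.
clear h; rename h2 into h.
rewrite ge0_integralZl_EFin in h; [|exact: measurable_itv| | |exact: ltW].
- move: h; set I := (\int[_]_(_ in _) _)%E.
  have I0 : (0 <= I)%E by apply: integral_ge0 => y _; rewrite lee_fin expR_ge0.
  case: I I0 => [r| |] //=.
  + move=> _ /eqP; rewrite -EFinM eqe => /eqP crE.
    congr EFin; rewrite -[r]mul1r -(mulVf (negbT (gt_eqF c0))) -mulrA crE mulr1 //.
  + by move=> _; rewrite gt0_muley ?lte_fin.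
- by move=> y _; rewrite lee_fin expR_ge0.
- apply/measurable_EFinP; apply: measurable_funTS.
  apply: continuous_measurable_fun => x.
  apply: continuous_comp; last exact: continuous_expR.
  apply: (@continuousN _ R^o); apply: (@continuousM _ R^o (fun=> c) id) => //.
  exact: cst_continuous.
Qed.

Ltac mt := repeat first [ exact: measurable_cst | exact: measurable_id
  | exact: measurable_fst | exact: measurable_snd
  | apply: measurable_funD | apply: measurable_funB | apply: measurable_funM
  | apply: measurable_funN
  | apply: (measurableT_comp (@measurable_expR _))
  | apply: (measurableT_comp (@normr_measurable _ setT))
  | apply: (measurableT_comp measurable_fst)
  | apply: (measurableT_comp measurable_snd) ].

Lemma mt_test (R : realType) (a b : R) :
  measurable_fun (@pos_half R) (fun y : R => `|expR (- (a * y)) - expR (- (b * y))|).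
Proof. apply: measurable_funTS; mt. Qed.

Lemma mt_test2 (R : realType) (a b : R) :
  measurable_fun setT (fun p : (R * R) * R => `|expR (- (a * p.1.2)) - p.2 * p.1.1 ^+ 2|).
Proof. mt. Qed.

Lemma int_expdiff_le (R : realType) (a b : R) : 0 < b -> b <= a ->
  (\int[lebesgue_measure]_(y in (@pos_half R)) (`|expR (- (a * y)) - expR (- (b * y))|)%:E
   = (b^-1 - a^-1)%:E)%E.
Proof.
move=> b0 ba; have a0 : 0 < a by apply: lt_le_trans ba.
have mP : measurable (@pos_half R) by exact: measurable_itv.
have h : (\int[lebesgue_measure]_(y in (@pos_half R)) (expR (- (b * y)))%:E =
  \int[lebesgue_measure]_(y in (@pos_half R))
     ((`|expR (- (a * y)) - expR (- (b * y))|)%:E + (expR (- (a * y)))%:E))%E.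
  apply: eq_integral => y; rewrite inE /pos_half /= in_itv /= andbT => y0.
  rewrite -EFinD; congr EFin.
  rewrite ler0_norm ?subr_le0; first by ring.
  by rewrite ler_expR lerN2 ler_pM2r.
rewrite ge0_integralD // in h; cycle 1.
  all: try (by move=> y _; rewrite lee_fin ?expR_ge0).
  all: try (by apply/measurable_EFinP; apply: measurable_funTS; mt).
rewrite !int_exp // in h.
move: h; set I := (\int[_]_(_ in _) _)%E.
have I0 : (0 <= I)%E by apply: integral_ge0 => y _; rewrite lee_fin.
case: I I0 => [r| |] //= _.
by rewrite -EFinD => -[->]; congr EFin; ring.
Qed.

Lemma int_expdiff (R : realType) (a b : R) : 0 < a -> 0 < b ->
  (\int[lebesgue_measure]_(y in (@pos_half R)) (`|expR (- (a * y)) - expR (- (b * y))|)%:E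
   = (`|a^-1 - b^-1|)%:E)%E.
Proof.
move=> a0 b0; have [ba|ab] := leP b a.
  rewrite int_expdiff_le // distrC ger0_norm // subr_ge0.
  by rewrite lef_pV2 ?posrE.
under eq_integral do rewrite distrC.
rewrite int_expdiff_le // ?ltW // ger0_norm // subr_ge0.
by rewrite lef_pV2 ?posrE // ltW.
Qed.

Definition gfun {R : realType} (t x y z : R) := z ^+ 2 * t * expR (- (z * (x + t * y))).
Definition Afun {R : realType} (z x : R) := z ^+ 2 * expR (- (z * x)).
Definition Bfun {R : realType} (t t0 z y : R) :=
  `|t - t0| * expR (- ((t0 * z) * y)) + t * `|expR (- ((t * z) * y)) - expR (- ((t0 * z) * y))|.

Lemma Afun_ge0 (R : realType) (z x : R) : 0 <= Afun z x.
Proof. by rewrite /Afun mulr_ge0 ?expR_ge0 ?sqr_ge0. Qed.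

Lemma Bfun_ge0 (R : realType) (t t0 z y : R) : 0 <= t -> 0 <= Bfun t t0 z y.
Proof. by move=> t0'; rewrite /Bfun addr_ge0 ?mulr_ge0 ?expR_ge0. Qed.

Lemma real_bound (R : realType) (t t0 x y z : R) : 0 < t ->
  `|gfun t x y z - gfun t0 x y z| <= Afun z x * Bfun t t0 z y.
Proof.
move=> tp.
have e u : expR (- (z * (x + u * y))) = expR (- (z * x)) * expR (- ((u * z) * y)).
  by rewrite -expRD; congr expR; ring.
rewrite /gfun !e (_ : _ - _ = Afun z x * (t * expR (- ((t * z) * y)) - t0 * expR (- ((t0 * z) * y)))); last first.
  by rewrite /Afun; ring.
rewrite normrM ger0_norm ?Afun_ge0 //; apply: ler_wpM2l; first exact: Afun_ge0.
rewrite (_ : _ - _ = (t - t0) * expR (- ((t0 * z) * y)) +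
   t * (expR (- ((t * z) * y)) - expR (- ((t0 * z) * y)))); last by ring.
rewrite /Bfun; apply: le_trans (ler_normD _ _) _.
by rewrite !normrM (ger0_norm (expR_ge0 _)) (gtr0_norm tp).
Qed.

Lemma g_bound (R : realType) (t x y z : R) : 0 < t -> 0 < x -> 0 < y -> 0 <= z ->
  `|gfun t x y z| <= t * 2 / (x + t * y) ^+ 2.
Proof.
move=> tp xp yp zp; set s := x + t * y.
have sp : 0 < s by rewrite /s addr_gt0 // mulr_gt0.
have hE := expR_ge1Dxn 1 (mulr_ge0 zp (ltW sp)).
have E1 : expR (- (z * s)) * expR (z * s) = 1 by rewrite -expRD addNr expR0.
have Ep := expR_ge0 (- (z * s)).
rewrite /gfun -/s ger0_norm; last by rewrite !mulr_ge0 // ?sqr_ge0 // ltW.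
rewrite ler_pdivlMr; last by rewrite exprn_gt0.
move: hE => /=; rewrite (_ : 2`!%:R = 2 :> R); last by [].
move=> hE.
have h2 : z ^+ 2 * s ^+ 2 <= 2 * expR (z * s).
  have -> : z ^+ 2 * s ^+ 2 = 2 * ((z * s) ^+ 2 / 2) by rewrite [RHS]mulrC divfK // exprMn.
  rewrite ler_pM2l //.
  by apply: le_trans hE; rewrite lerDr.
have h3 : expR (- (z * s)) * (z ^+ 2 * s ^+ 2) <= 2.
  by have := ler_wpM2l Ep h2; rewrite [X in _ <= X]mulrCA E1 mulr1.
rewrite (_ : _ * s ^+ 2 = t * (expR (- (z * s)) * (z ^+ 2 * s ^+ 2))); last by ring.
by rewrite ler_pM2l.
Qed.

Lemma g_integrable (R : realType) (F : {measure set R -> \bar R}) (t x y : R) :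
  0 < t -> 0 < x -> 0 < y -> F pos_half = 1%E ->
  F.-integrable pos_half (EFin \o gfun t x y).
Proof.
move=> tp xp yp hF.
have mP : measurable (@pos_half R) by exact: measurable_itv.
apply/integrableP; split.
  by apply/measurable_EFinP; apply: measurable_funTS; rewrite /gfun; mt.
apply: (@le_lt_trans _ _ (\int[F]_(z in pos_half) (t * 2 / (x + t * y) ^+ 2)%:E)%E).
  apply: ge0_le_integral => //.
  - apply: measurableT_comp => //; apply/measurable_EFinP; apply: measurable_funTS.
    rewrite /gfun; mt.
  - move=> z; rewrite /pos_half /= in_itv /= andbT => zp.
    by rewrite /= lee_fin; apply: g_bound => //; exact: ltW.
by rewrite integral_cst // hF mule1 ltry.
Qed.

Lemma PW (R : realType) (F : {measure set R -> \bar R}) (t t0 x y : R) :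
  0 < t -> 0 < t0 -> 0 < x -> 0 < y -> F pos_half = 1%E ->
  (`|frailty_density F t (x, y) - frailty_density F t0 (x, y)| <=
   \int[F]_(z in pos_half) (Afun z x * Bfun t t0 z y)%:E)%E.
Proof.
move=> tp t0p xp yp hF.
have mP : measurable (@pos_half R) by exact: measurable_itv.
have -> : frailty_density F t (x, y) = (\int[F]_(z in pos_half) (gfun t x y z)%:E)%E by [].
have -> : frailty_density F t0 (x, y) = (\int[F]_(z in pos_half) (gfun t0 x y z)%:E)%E by [].
rewrite -integralB_EFin //; last 2 first.
  exact: g_integrable.
  exact: g_integrable.
apply: le_trans (le_abse_integral _ _ _) _ => //.
  by apply: emeasurable_funB; apply/measurable_EFinP; apply: measurable_funTS; rewrite /gfun; mt.
apply: ge0_le_integral => //.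
- apply: measurableT_comp => //; apply: emeasurable_funB; apply/measurable_EFinP;
    apply: measurable_funTS; rewrite /gfun; mt.
- by apply/measurable_EFinP; apply: measurable_funTS; rewrite /Afun /Bfun; mt.
- move=> z _; rewrite -EFinB /= lee_fin; exact: real_bound.
Qed.

Lemma intA (R : realType) (z : R) : 0 < z ->
  (\int[lebesgue_measure]_(x in (@pos_half R)) (Afun z x)%:E = z%:E)%E.
Proof.
move=> zp.
have mP : measurable (@pos_half R) by exact: measurable_itv.
rewrite /Afun.
under eq_integral do rewrite EFinM.
rewrite ge0_integralZl_EFin //; cycle 1.
  all: try (by move=> x _; rewrite lee_fin ?expR_ge0).
  all: try (by apply/measurable_EFinP; apply: measurable_funTS; mt).
  all: try exact: sqr_ge0.
rewrite int_exp // -EFinM; congr EFin.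
by rewrite expr2 mulfK // gt_eqF.
Qed.

Lemma intB (R : realType) (t t0 z : R) : 0 < t -> 0 < t0 -> 0 < z ->
  (\int[lebesgue_measure]_(y in (@pos_half R)) (Bfun t t0 z y)%:E
    = (2 * `|t - t0| / (t0 * z))%:E)%E.
Proof.
move=> tp t0p zp.
have mP : measurable (@pos_half R) by exact: measurable_itv.
rewrite /Bfun.
under eq_integral do rewrite EFinD EFinM [X in (_ + X)%E]EFinM.
rewrite ge0_integralD //; cycle 1.
  all: try (by move=> y _; rewrite -EFinM lee_fin mulr_ge0 ?expR_ge0 // ltW).
  all: try (by apply/measurable_EFinP; apply: measurable_funTS; mt).
  all: try (by apply: emeasurable_funM; apply/measurable_EFinP; apply: measurable_funTS; mt).
rewrite !ge0_integralZl_EFin //; cycle 1.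
  all: try (by move=> x _; rewrite lee_fin ?expR_ge0).
  all: try (by apply/measurable_EFinP; apply: measurable_funTS; mt).
  all: try exact: ltW.
rewrite int_exp ?mulr_gt0 // int_expdiff ?mulr_gt0 // -!EFinM -EFinD; congr EFin.
have -> : (t * z)^-1 - (t0 * z)^-1 = (t0 - t) / (t * t0 * z).
  by field; rewrite !gt_eqF.
have hp : 0 < (t * t0 * z)^-1 by rewrite invr_gt0 !mulr_gt0.
rewrite normrM (gtr0_norm hp).
rewrite distrC.
field; rewrite !gt_eqF //.
Qed.

Lemma mindP (R : realType) : measurable_fun setT (\1_(@pos_half R) : R -> R).
Proof. by apply: measurable_indic; exact: measurable_itv. Qed.

Ltac mt2 := repeat first [ exact: measurable_cst | exact: measurable_id
  | exact: measurable_fst | exact: measurable_snd | exact: mindP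
  | apply: measurable_funD | apply: measurable_funB | apply: measurable_funM
  | apply: measurable_funN
  | apply: (measurableT_comp (@measurable_expR _))
  | apply: (measurableT_comp (@normr_measurable _ setT))
  | apply: (measurableT_comp (@mindP _))
  | apply: (measurableT_comp measurable_fst)
  | apply: (measurableT_comp measurable_snd) ].

Lemma ind_ge0 (R : realType) (T : Type) (A : set T) (x : T) : 0 <= (\1_A x : R).
Proof. by rewrite indicE ler0n. Qed.

Definition Kfun {R : realType} (t t0 : R) (p : (R * R) * R) : R :=
  \1_pos_half p.2 * ((\1_pos_half p.1.1 * Afun p.2 p.1.1) *
                     (\1_pos_half p.1.2 * Bfun t t0 p.2 p.1.2)).

Lemma Kfun_ge0 (R : realType) (t t0 : R) p : 0 < t -> 0 <= Kfun t t0 p.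
Proof.
move=> tp; rewrite /Kfun; apply: mulr_ge0; first exact: ind_ge0.
apply: mulr_ge0; apply: mulr_ge0; rewrite ?ind_ge0 ?Afun_ge0 //.
by apply: Bfun_ge0; exact: ltW.
Qed.

Lemma mKfun (R : realType) (t t0 : R) : measurable_fun setT (@Kfun R t t0).
Proof. rewrite /Kfun /Afun /Bfun; mt2. Qed.

Lemma fub_inner (R : realType) (t t0 z : R) : 0 < t -> 0 < t0 -> 0 < z ->
  (\int[(@lebesgue_measure R) \x (@lebesgue_measure R)]_xy (Kfun t t0 (xy, z))%:E
    = (2 * `|t - t0| / t0)%:E)%E.
Proof.
move=> tp t0p zp.
have mP : measurable (@pos_half R) by exact: measurable_itv.
have Pz : z \in (@pos_half R) by rewrite inE /pos_half /= in_itv /= andbT.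
rewrite fubini_tonelli1 //; last 2 first.
  by apply/measurable_EFinP; rewrite /Kfun /Afun /Bfun /=; mt2.
  by move=> xy; rewrite lee_fin Kfun_ge0.
rewrite /fubini_F.
transitivity (\int[lebesgue_measure]_x
   ((\1_pos_half x * Afun z x) * (2 * `|t - t0| / (t0 * z)))%:E)%E.
  apply: eq_integral => x _.
  transitivity (\int[lebesgue_measure]_y
     ((\1_pos_half x * Afun z x)%:E * (\1_pos_half y * Bfun t t0 z y)%:E))%E.
    by apply: eq_integral => y _; rewrite /Kfun /= indicE Pz mul1r -EFinM.
  rewrite ge0_integralZl_EFin //; cycle 1.
    all: try (by move=> y _; rewrite lee_fin mulr_ge0 ?ind_ge0 ?Bfun_ge0 // ltW).
    all: try (by apply/measurable_EFinP; rewrite /Bfun; mt2).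
    all: try (by rewrite mulr_ge0 ?ind_ge0 ?Afun_ge0).
  by rewrite -int_indicE intB // -EFinM.
transitivity ((2 * `|t - t0| / (t0 * z))%:E *
   \int[lebesgue_measure]_x (\1_pos_half x * Afun z x)%:E)%E.
  rewrite -ge0_integralZl_EFin //; cycle 1.
    all: try (by move=> y _; rewrite lee_fin mulr_ge0 ?ind_ge0 ?Afun_ge0).
    all: try (by apply/measurable_EFinP; rewrite /Afun; mt2).
    all: try (by rewrite !mulr_ge0 // ?invr_ge0 ?mulr_ge0 // ltW).
  by apply: eq_integral => x _; rewrite -EFinM mulrC.
rewrite -int_indicE intA // -EFinM; congr EFin.
by field; rewrite !gt_eqF.
Qed.

Lemma fub_inner0 (R : realType) (t t0 z : R) : ~ (@pos_half R) z ->
  (\int[(@lebesgue_measure R) \x (@lebesgue_measure R)]_xy (Kfun t t0 (xy, z))%:E = 0)%E.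
Proof.
move=> Pz; apply: integral0_eq => xy _.
by rewrite /Kfun /= indicE memNset // mul0r.
Qed.

Section SF.
Variable R : realType.
Definition lm2 := ((@lebesgue_measure R) \x (@lebesgue_measure R))%E.
HB.instance Definition _ := Measure.on lm2.
Lemma lm2_sf : sigma_finite setT lm2.
Proof.
have /sigma_finiteP[F [TF ndF Foo]] := sigma_finiteT (@lebesgue_measure R).
exists (fun n => F n `*` F n).
  rewrite -setXTT TF predeqE => -[x y]; split.
    move=> [/= [n _ Fnx] [k _ Gky]]; exists (maxn n k) => //; split.
    - by move: x Fnx; exact/subsetPset/ndF/leq_maxl.
    - by move: y Gky; exact/subsetPset/ndF/leq_maxr.
  by move=> [n _ []/= ? ?]; split; exists n.
move=> k; have [? ?] := Foo k.
split; first exact: measurableX.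
by rewrite /lm2 product_measure1E// lte_mul_pinfty// ge0_fin_numE.
Qed.
HB.instance Definition _ := Measure_isSigmaFinite.Build _ _ _ lm2 lm2_sf.
End SF.

Theorem mainTheorem2 (R : realType) (theta theta0 : R)
  (F : probability R R)
  (Hth : 0 < theta) (Hth0 : 0 < theta0)
  (HF : F pos_half = 1%E) :
  (L1_dist_pos_quadrant (frailty_density F theta) (frailty_density F theta0)
    <= (2 * `|theta - theta0| / theta0)%:E)%E.
Proof.
have mP : measurable (@pos_half R) by exact: measurable_itv.
have mQ : measurable ((@pos_half R) `*` (@pos_half R)) by exact: measurableX.
have posP (u : R) : pos_half u -> 0 < u.
  by rewrite /pos_half /= in_itv /= andbT.
have fdE t : frailty_density F t =
    fun xy => (\int[F]_z (\1_pos_half z * gfun t xy.1 xy.2 z)%:E)%E.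
  by apply/funext => xy; rewrite /frailty_density int_indicE.
have mfd t : 0 < t -> measurable_fun setT (frailty_density F t).
  move=> tp; rewrite fdE.
  apply: (measurable_fun_fubini_tonelli_F
     (fun p : (R * R) * R => (\1_pos_half p.2 * gfun t p.1.1 p.1.2 p.2)%:E)).
  - by apply/measurable_EFinP; rewrite /gfun; mt2.
  - move=> p; rewrite lee_fin; apply: mulr_ge0; first exact: ind_ge0.
    rewrite /gfun; apply: mulr_ge0; [apply: mulr_ge0; [exact: sqr_ge0 | exact: ltW] | exact: expR_ge0].
set c := 2 * `|theta - theta0| / theta0.
have mK : measurable_fun setT (fun p : (R * R) * R => (Kfun theta theta0 p)%:E).
  by apply/measurable_EFinP; exact: mKfun.
have K0 p : (0 <= (Kfun theta theta0 p)%:E)%E by rewrite lee_fin Kfun_ge0.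
rewrite /L1_dist_pos_quadrant.
apply: (@le_trans _ _ (\int[(@lebesgue_measure R) \x (@lebesgue_measure R)]_(xy in pos_half `*` pos_half)
   \int[F]_z (Kfun theta theta0 (xy, z))%:E)%E).
  apply: ge0_le_integral => //.
  - apply: measurable_funTS; apply: measurableT_comp => //.
    by apply: emeasurable_funB; exact: mfd.
  - apply: measurable_funTS.
    exact: (measurable_fun_fubini_tonelli_F (fun p => (Kfun theta theta0 p)%:E)).
  - move=> [x y] [/= Px Py].
    apply: le_trans (@PW R F theta theta0 x y Hth Hth0 (posP _ Px) (posP _ Py) HF) _.
    rewrite int_indicE le_eqVlt; apply/orP; left; apply/eqP.
    apply: eq_integral => z _; rewrite /Kfun /= !indicE (mem_set Px) (mem_set Py).
    by rewrite !mul1r.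
have E1 : (\int[(@lebesgue_measure R) \x (@lebesgue_measure R)]_(xy in pos_half `*` pos_half)
   \int[F]_z (Kfun theta theta0 (xy, z))%:E =
   \int[(@lebesgue_measure R) \x (@lebesgue_measure R)]_xy
   \int[F]_z (Kfun theta theta0 (xy, z))%:E)%E.
  rewrite integral_mkcond; apply: eq_integral => xy _; rewrite patchE.
  case: ifPn => // /negP Q; apply/esym; apply: integral0_eq => z _.
  rewrite /Kfun /= !indicE.
  case: (boolP (xy.1 \in pos_half)) => [/set_mem P1|_]; last by rewrite !mul0r mulr0.
  case: (boolP (xy.2 \in pos_half)) => [/set_mem P2|_]; last by rewrite !mul0r !mulr0.
  by exfalso; apply: Q; apply/mem_set; split.
rewrite E1.
rewrite (_ : (\int[(@lebesgue_measure R) \x (@lebesgue_measure R)]_xy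
   \int[F]_z (Kfun theta theta0 (xy, z))%:E =
   \int[F]_z \int[(@lebesgue_measure R) \x (@lebesgue_measure R)]_xy
     (Kfun theta theta0 (xy, z))%:E)%E); last first.
  exact: (@fubini_tonelli _ _ _ _ _ (lm2 R) F (fun p => (Kfun theta theta0 p)%:E)).
have E2 : (\int[F]_z \int[(@lebesgue_measure R) \x (@lebesgue_measure R)]_xy
     (Kfun theta theta0 (xy, z))%:E = \int[F]_(z in pos_half) c%:E)%E.
  rewrite int_indicE; apply: eq_integral => z _; rewrite indicE.
  case: (boolP (z \in pos_half)) => [/set_mem Pz|/negP Pz].
    by rewrite fub_inner // ?posP // mul1r.
  by rewrite fub_inner0 ?mul0r //; move=> h; apply: Pz; exact: mem_set.
rewrite E2 integral_cst //; rewrite le_eqVlt; apply/orP; left; apply/eqP; rewrite -[RHS]mule1; congr (_ * _)%E; exact: HF.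
Qed.
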